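(* For every cardinal $\mu$ there exist a set of colours $C_\mu$ and an objective $W_\mu\subseteq C_\mu^\omega$ such that: (1) $W_\mu$ has ($\varepsilon$-free) memory $\le 2$; (2) the objective $W_\mu^\varepsilon\subseteq (C_\mu^\varepsilon)^\omega$, considered in games over $C_\mu^\varepsilon$-graphs, does not have ($\varepsilon$-free) memory $<\mu$; and consequently $W_\mu$ does not have $\varepsilon$-memory $<\mu$; (3) there is a cardinal $\kappa$ such that every monotone $(\kappa,W_\mu)$-universal $C_\mu$-graph contains an antichain of cardinality $\mu$.
   Context: For a set $D$ of colours: a $D$-graph $G$ is a vertex set $V(G)$ with edges $E(G)\subseteq V(G)\times D\times V(G)$, written $v\xrightarrow{c}v'$, every vertex having an outgoing edge; a $D$-tree is a $D$-graph with a root $t_0$ such that every vertex has a unique path from $t_0$. A morphism maps vertices so that edges go to edges of the same colour. An objective $W\subseteq D^\omega$; a vertex satisfies $W$ if all infinite paths from it have colour sequence in $W$. A $D$-game is $(G,V_{\mathrm{Eve}},v_0,W)$; a strategy is $(S,\pi,s_0)$ with $S$ a $D$-graph, $\pi:S\to G$ a morphism, $\pi(s_0)=v_0$, such that for all $v\notin V_{\mathrm{Eve}}$, $v\xrightarrow{c}v'\in E(G)$ and $s\in\pi^{-1}(v)$ there is $s'\in\pi^{-1}(v')$ with $s\xrightarrow{c}s'\in E(S)$; it is winning if $s_0$ satisfies $W$ in $S$. The objective has memory $\le\nu$ (resp. $<\nu$) if in every game with objective $W$ won by Eve (i.e. admitting a winning strategy) there is a winning strategy with $|\pi^{-1}(v)|\le\nu$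 (resp. $<\nu$) for all $v$. Let $\varepsilon$ be a fresh colour, $C^\varepsilon=C\sqcup\{\varepsilon\}$; $W^\varepsilon$ is the set of $w\in(C^\varepsilon)^\omega$ such that either $w_C$ (delete the $\varepsilon$'s) is infinite and in $W$, or $w_C$ is finite and $w_Cw'\in W$ for some $w'\in C^\omega$. An $\varepsilon$-strategy is a strategy with $V(S)\subseteq V(G)\times M$, $\pi(v,m)=v$, such that $(v,m)\xrightarrow{\varepsilon}(v',m')\in E(S)$ implies $m=m'$; its memory is $|M|$. $W$ has $\varepsilon$-memory $<\nu$ if every $C^\varepsilon$-game with objective $W^\varepsilon$ won by Eve is won by an $\varepsilon$-strategy of memory $<\nu$. A partially ordered graph $(G,\le)$ is monotone if $u\ge v\xrightarrow{c}v'\ge u'$ implies $u\xrightarrow{c}u'$. $G$ is $(\kappa,W)$-universal if every $D$-tree $T$ of cardinality $<\kappa$ with root $t_0$ admits a morphism $\phi:T\to G$ such that $\phi(t_0)$ satisfies $W$ whenever $t_0$ does. *)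

(* Defs.v *)
From mathcomp Require Import all_boot.
Set Implicit Arguments. Unset Strict Implicit. Unset Printing Implicit Defensive.

Record graph (D : Type) := Graph {
  vert : Type;
  edge : vert -> D -> vert -> Prop;
  edge_out : forall v, exists c v', edge v c v' }.
Arguments edge {D G} _ _ _ : rename.

Definition objective (D : Type) := (nat -> D) -> Prop.

Definition inf_path D (G : graph D) (v : vert G) (p : nat -> vert G) (w : nat -> D) :=
  p 0 = v /\ forall i, edge (p i) (w i) (p i.+1).

Definition satisfies D (G : graph D) (W : objective D) (v : vert G) :=
  forall p w, inf_path v p w -> W w.

Definition morphism D (G H : graph D) (f : vert G -> vert H) :=
  forall v c v', edge v c v' -> edge (f v) c (f v').

Record game (D : Type) := Game {
  arena : graph D;
  eve : vert arena -> Prop;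
  init : vert arena;
  obj : objective D }.

Record strategy D (g : game D) := Strategy {
  sgraph : graph D;
  proj : vert sgraph -> vert (arena g);
  sinit : vert sgraph;
  proj_morph : morphism proj;
  proj_init : proj sinit = init g;
  adam_closed : forall (v : vert (arena g)) c v' (s : vert sgraph),
      ~ eve v -> edge v c v' -> proj s = v ->
      exists s', proj s' = v' /\ edge s c s' }.

Arguments proj {D g} s _ : rename.
Arguments sinit {D g} s : rename.
Arguments sgraph {D g} s : rename.

Definition winning D (g : game D) (s : strategy g) : Prop :=
  satisfies (obj g) (sinit s).

Definition won_by_eve D (g : game D) : Prop := exists s : strategy g, winning s.

Definition card_le (A B : Type) : Prop := exists f : A -> B, injective f.
Definition card_lt (A B : Type) : Prop := card_le A B /\ ~ card_le B A.

Definition fibre D (g : game D) (s : strategy g) (v : vert (arena g)) : Type :=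
  { x : vert (sgraph s) | proj s x = v }.

Definition memory_le D (W : objective D) (N : Type) : Prop :=
  forall (G : graph D) (Eve : vert G -> Prop) (v0 : vert G),
    won_by_eve (Game Eve v0 W) ->
    exists s : strategy (Game Eve v0 W),
      winning s /\ forall v, card_le (fibre s v) N.

Definition memory_lt D (W : objective D) (N : Type) : Prop :=
  forall (G : graph D) (Eve : vert G -> Prop) (v0 : vert G),
    won_by_eve (Game Eve v0 W) ->
    exists s : strategy (Game Eve v0 W),
      winning s /\ forall v, card_lt (fibre s v) N.

(* C^eps = option C, with None playing the role of the fresh colour eps. *)
Definition erase C (w : nat -> option C) (n : nat) : seq C := pmap id (mkseq w n).

(* u extends the (finite or infinite) word w_C: every finite part of w_C is
   a prefix of u. *)
Definition erase_prefix_of C (w : nat -> option C) (u : nat -> C) : Prop :=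
  forall n, erase w n = mkseq u (size (erase w n)).

Definition eps_obj C (W : objective C) : objective (option C) := fun w =>
  (* w_C infinite and w_C in W *)
  ((forall k, exists n, k < size (erase w n)) /\
     exists u, W u /\ erase_prefix_of w u)
  \/
  (* w_C finite and w_C w' in W for some w' *)
  ((exists k, forall n, size (erase w n) <= k) /\
     exists u, W u /\ erase_prefix_of w u).

Definition eps_strategy C (g : game (option C)) (s : strategy g) (M : Type) : Prop :=
  exists iota : vert (sgraph s) -> (vert (arena g) * M)%type,
    injective iota /\
    (forall x, (iota x).1 = proj s x) /\
    (forall x x', edge x None x' -> (iota x).2 = (iota x').2).

Definition eps_memory_lt C (W : objective C) (N : Type) : Prop :=
  forall (G : graph (option C)) (Eve : vert G -> Prop) (v0 : vert G),
    won_by_eve (Game Eve v0 (eps_obj W)) ->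
    exists (M : Type) (s : strategy (Game Eve v0 (eps_obj W))),
      card_lt M N /\ eps_strategy s M /\ winning s.

Fixpoint fpath D (G : graph D) (u : vert G) (p : seq (D * vert G)) : Prop :=
  match p with
  | [::] => True
  | (c, v) :: p' => edge u c v /\ fpath v p'
  end.

Definition fpath_end D (G : graph D) (u : vert G) (p : seq (D * vert G)) : vert G :=
  last u (map snd p).

Definition is_tree D (T : graph D) (t0 : vert T) : Prop :=
  forall t : vert T, exists p, fpath t0 p /\ fpath_end t0 p = t /\
    forall q, fpath t0 q -> fpath_end t0 q = t -> q = p.

Definition universal D (K : Type) (W : objective D) (G : graph D) : Prop :=
  forall (T : graph D) (t0 : vert T), is_tree t0 -> card_lt (vert T) K ->
    exists phi : vert T -> vert G, morphism phi /\
      (satisfies W t0 -> satisfies W (phi t0)).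

Definition partial_order (V : Type) (le : V -> V -> Prop) : Prop :=
  (forall x, le x x) /\ (forall x y, le x y -> le y x -> x = y) /\
  (forall x y z, le x y -> le y z -> le x z).

Definition monotone D (G : graph D) (le : vert G -> vert G -> Prop) : Prop :=
  forall u v v' u' c, le v u -> edge v c v' -> le u' v' -> edge u c u'.

Definition has_antichain (V : Type) (le : V -> V -> Prop) (M : Type) : Prop :=
  exists f : M -> V, injective f /\
    forall x y, x <> y -> ~ le (f x) (f y).

(* Main.v *)
Require Import Defs.
From mathcomp Require Import all_boot.
From Stdlib Require Import Classical ClassicalEpsilon ProofIrrelevance.
Set Implicit Arguments. Unset Strict Implicit.

Definition NR (C : Type) : objective C := fun w => forall i, w i <> w i.+1.

Lemma exists_path D (G : graph D) (v : vert G) : exists p w, inf_path v p w.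
Proof.
have H : forall u : vert G, exists x : D * vert G, edge u x.1 x.2.
  by move=> u; case: (edge_out u) => c [u' e]; exists (c, u').
pose f u := proj1_sig (constructive_indefinite_description _ (H u)).
exists (fun i => iter i (fun u => (f u).2) v).
exists (fun i => (f (iter i (fun u => (f u).2) v)).1).
split => // i /=.
exact: (proj2_sig (constructive_indefinite_description _ (H _))).
Qed.

Lemma pick_bool (P : Prop) : exists b : bool, b = true <-> P.
Proof.
case: (classic P) => h; [by exists true | by exists false; split => // /h].
Qed.

Section Part1.
Variables (C : Type) (G : graph C) (Eve : vert G -> Prop) (v0 : vert G).
Variable S0 : strategy (Game Eve v0 (@NR C)).
Hypothesis win0 : winning S0.

Definition good_from (s : vert (sgraph S0)) (o : option C) :=
  forall p w, inf_path s p w -> NR w /\ (forall c, o = Some c -> w 0 <> c).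

Definition Win v o := exists s, proj S0 s = v /\ good_from s o.

Lemma win_step s o d s' : good_from s o -> edge s d s' ->
  good_from s' (Some d) /\ (forall c, o = Some c -> d <> c).
Proof.
move=> hs e.
have key : forall p' w', inf_path s' p' w' -> NR w' /\ d <> w' 0 /\ (forall c, o = Some c -> d <> c).
  move=> p' w' [h0 hp].
  pose p i := if i is k.+1 then p' k else s.
  pose w i := if i is k.+1 then w' k else d.
  have : inf_path s p w.
    split => // [[|i]] /=; last exact: hp.
    by rewrite h0.
  case/hs => nr hc; split; first by move=> i; exact: (nr i.+1).
  split; first exact: (nr 0).
  move=> c oc; exact: (hc c oc).
split.
  move=> p w hp; case: (key _ _ hp) => nr [hd _]; split => // c [<-]; by apply: nesym.
case: (exists_path s') => p [w hp].
by case: (key _ _ hp) => _ [].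
Qed.

Definition Good v d v' := edge v d v' /\ Win v' (Some d).

Lemma win_eve v o : Win v o -> exists d v', Good v d v' /\ (forall c, o = Some c -> d <> c).
Proof.
case=> s [ps hs]; case: (edge_out s) => d [s' e].
case: (win_step hs e) => h1 h2.
exists d, (proj S0 s'); split => //; split; last by exists s'.
rewrite -ps; exact: (proj_morph e).
Qed.

Lemma win_adam v o : ~ Eve v -> Win v o -> forall d v', edge v d v' ->
  Win v' (Some d) /\ (forall c, o = Some c -> d <> c).
Proof.
move=> ne [s [ps hs]] d v' e.
case: (@adam_closed _ _ S0 v d v' s ne e ps) => s' [ps' e'].
case: (win_step hs e') => h1 h2; split => //; by exists s'.
Qed.

Definition a v : option C :=
  epsilon (inhabits None) (fun o => exists d, o = Some d /\ exists v', Good v d v').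

Lemma a_spec v d v' : Good v d v' -> exists d0, a v = Some d0 /\ exists v'', Good v d0 v''.
Proof.
move=> g; rewrite /a.
apply: (epsilon_spec (inhabits None) (fun o => exists d, o = Some d /\ exists v', Good v d v')).
by exists (Some d), d; split => //; exists v'.
Qed.

Definition E (x : vert G * bool) (d : C) (y : vert G * bool) : Prop :=
  edge x.1 d y.1 /\ (y.2 = true <-> Eve y.1 /\ a y.1 = Some d) /\
  (Eve x.1 -> (exists d' v', Good x.1 d' v') ->
     if x.2 then ((exists d' v', Good x.1 d' v' /\ a x.1 <> Some d') ->
                   Good x.1 d y.1 /\ a x.1 <> Some d)
     else (Good x.1 d y.1 /\ a x.1 = Some d)).

Lemma E_out x : exists d y, E x d y.
Proof.
case: x => v b.
have gen : forall d v', edge v d v' -> (Eve v -> (exists d' v', Good v d' v') ->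
     if b then ((exists d' v', Good v d' v' /\ a v <> Some d') ->
                   Good v d v' /\ a v <> Some d)
     else (Good v d v' /\ a v = Some d)) -> exists d y, E (v, b) d y.
  move=> d v' e h; case: (pick_bool (Eve v' /\ a v' = Some d)) => b' hb'.
  by exists d, (v', b').
case: (classic (Eve v /\ exists d' v', Good v d' v')) => [[ev [d' [v' g]]]|nev].
  case: b gen => gen.
    case: (classic (exists d' v', Good v d' v' /\ a v <> Some d')) => [[d1 [v1 [g1 n1]]]|nex].
      by apply: (gen d1 v1 g1.1) => _ _ _.
    case: (edge_out v) => d [v'' e]; apply: (gen d v'' e) => _ _ h; by case: (nex h).
  case: (a_spec g) => d0 [ha [v'' g0]].
  by apply: (gen d0 v'' g0.1) => _ _.
case: (edge_out v) => d [v'' e]; apply: (gen d v'' e) => ev h; by case: nev.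
Qed.

Definition S'graph : graph C := @Graph C (vert G * bool)%type E E_out.

Lemma S'morph : @morphism C S'graph G fst.
Proof. by move=> x d y [e _]. Qed.

Lemma S'adam : forall (v : vert G) c v' (s : vert S'graph),
      ~ Eve v -> edge v c v' -> fst s = v ->
      exists s', fst s' = v' /\ edge s c s'.
Proof.
move=> v c v' [u b] ne e /= hu; subst u.
case: (pick_bool (Eve v' /\ a v' = Some c)) => b' hb'.
exists (v', b'); split => //; split => //; split => // ev; by case: ne.
Qed.

Definition S' : strategy (Game Eve v0 (@NR C)) :=
  @Strategy C (Game Eve v0 (@NR C)) S'graph fst (v0, false) S'morph erefl S'adam.

Definition lastl (w : nat -> C) i := if i is k.+1 then Some (w k) else None.

Lemma S'win : winning S'.
Proof.
move=> p w [p0 hp].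
pose Inv i := Win (p i).1 (lastl w i) /\
   ((p i).2 = true <-> Eve (p i).1 /\ exists c, lastl w i = Some c /\ a (p i).1 = Some c).
have step : forall i, Inv i -> Win (p i.+1).1 (Some (w i)) /\ (forall c, lastl w i = Some c -> w i <> c).
  move=> i [hw hst].
  case: (hp i) => e [hb hE].
  case: (classic (Eve (p i).1)) => ev; last exact: (win_adam ev hw e).
  case: (win_eve hw) => d [v' [g hd]].
  have ex : exists d' v', Good (p i).1 d' v' by exists d, v'.
  move: (hE ev ex); case: (p i).2 hst => hst.
    case: (proj1 hst erefl) => _ [c [hc hac]].
    case: (win_eve hw) => d1 [v1 [g1 hd1]].
    move=> h; case: h.
      exists d1, v1; split => //; rewrite hac => -[e1]; by apply: (hd1 c hc).
    move=> g2 na; split; first exact: g2.2.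
    by move=> c' hc'; rewrite hc in hc'; case: hc' => <- ewc; apply: na; rewrite hac ewc.
  case=> g2 ha; split; first exact: g2.2.
  move=> c hc ewc; have : false = true; last by [].
  apply/hst; split => //; exists c; split => //; by rewrite ha ewc.
have inv : forall i, Inv i.
  elim=> [|i IH].
    rewrite /Inv p0 /=; split.
      exists (sinit S0); split; first exact: (proj_init S0).
      move=> q u hq; split; first exact: (win0 hq).
      by [].
    by split => // -[_ [c [hc _]]].
  case: (step i IH) => h1 _; split => //=.
  case: (hp i) => _ [hb _]; rewrite hb; split.
    by case=> ev ha; split => //; exists (w i).
  by case=> ev [c [[<-] ha]].
move=> i.
case: (step i.+1 (inv i.+1)) => _ h.
by move=> e; apply: (h (w i)) => //; rewrite e.
Qed.

Lemma S'fib v : card_le (fibre S' v) bool.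
Proof.
exists (fun x => (proj1_sig x).2).
case=> [[v1 b1] h1] [[v2 b2] h2] /= eb; subst b2.
simpl in h1, h2.
have e : (v1, b1) = (v2, b1) by rewrite h1 h2.
exact: (@eq_sig _ (fun x : vert G * bool => x.1 = v) (exist _ (v1, b1) h1) (exist _ (v2, b1) h2) e (proof_irrelevance _ _ _)).
Qed.
End Part1.

Lemma part1 C : memory_le (@NR C) bool.
Proof.
move=> G Eve v0 [S0 win0].
exists (S' S0); split; [exact: S'win | exact: S'fib].
Qed.

Section Part2.
Variables (C : Type) (c1 c2 : C).
Hypothesis c12 : c1 <> c2.

Inductive GV := GStart | GHub | GVx (x y : C) | GSink.

Definition gedge (u : GV) (e : option C) (v : GV) : Prop :=
  match u with
  | GStart => v = GHub /\ exists c, e = Some c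
  | GHub => e = None /\ exists x y, x <> y /\ v = GVx x y
  | GVx x y => v = GSink /\ (e = Some x \/ e = Some y)
  | GSink => v = GSink /\ e = None
  end.

Lemma gedge_out u : exists e v, gedge u e v.
Proof.
case: u => [|||].
- by exists (Some c1), GHub; split => //; exists c1.
- by exists None, (GVx c1 c2); split => //; exists c1, c2.
- by move=> x y; exists (Some x), GSink; split => //; left.
- by exists None, GSink.
Qed.

Definition G2 : graph (option C) := @Graph _ GV gedge gedge_out.
Definition Eve2 (u : GV) : Prop := if u is GVx _ _ then True else False.
Definition game2 : game (option C) := @Game _ G2 Eve2 GStart (eps_obj (@NR C)).

Inductive SV := SStart | SHub (c : C) | SVx (c x y : C) | SSink.

Definition sedge (u : SV) (e : option C) (v : SV) : Prop :=
  match u with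
  | SStart => exists c, e = Some c /\ v = SHub c
  | SHub c => e = None /\ exists x y, x <> y /\ v = SVx c x y
  | SVx c x y => v = SSink /\ (e = Some x \/ e = Some y) /\ (x <> y -> e <> Some c)
  | SSink => v = SSink /\ e = None
  end.

Lemma sedge_out u : exists e v, sedge u e v.
Proof.
case: u => [|c|c x y|].
- by exists (Some c1), (SHub c1); exists c1.
- by exists None, (SVx c c1 c2); split => //; exists c1, c2.
- case: (classic (x = c)) => hx.
    exists (Some y), SSink; split => //; split; first by right.
    by move=> nxy [e]; apply: nxy; rewrite hx e.
  exists (Some x), SSink; split => //; split; first by left.
  by move=> _ [e].
- by exists None, SSink.
Qed.

Definition SG : graph (option C) := @Graph _ SV sedge sedge_out.

Definition sproj (u : SV) : GV :=
  match u with SStart => GStart | SHub _ => GHub | SVx _ x y => GVx x y | SSink => GSink end.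

Lemma sproj_morph : @morphism _ SG G2 sproj.
Proof.
case=> [|c|c x y|] e v /=.
- by case=> c [-> ->]; split => //; exists c.
- by case=> -> [x [y [nxy ->]]]; split => //; exists x, y.
- by case=> -> [h _].
- by case=> -> ->.
Qed.

Lemma sadam : forall (v : vert G2) e v' (s : vert SG),
  ~ Eve2 v -> edge v e v' -> sproj s = v -> exists s', sproj s' = v' /\ edge s e s'.
Proof.
move=> v e v' s ne ed hs; subst v.
case: s ne ed => [|c|c x y|] /= ne ed.
- case: ed => -> [c ->]; by exists (SHub c); split => //; exists c.
- case: ed => -> [x [y [nxy ->]]]; exists (SVx c x y); split => //; split => //.
  by exists x, y.
- by case: ne.
- case: ed => -> ->; by exists SSink.
Qed.

Definition strat2 : strategy game2 :=
  @Strategy _ game2 SG sproj SStart sproj_morph erefl sadam.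

Lemma erase3 (w : nat -> option C) : erase w 3 = pmap id [:: w 0; w 1; w 2].
Proof. by []. Qed.

Lemma strat2_win : winning strat2.
Proof.
move=> p w [p0 hp].
have h0 := hp 0; rewrite p0 /= in h0.
case: h0 => c [w0 p1].
have h1 := hp 1; rewrite p1 /= in h1.
case: h1 => w1 [x [y [nxy p2]]].
have h2 := hp 2; rewrite p2 /= in h2.
case: h2 => p3 [hd hc].
have hc' := hc nxy.
have hk : forall k, p k.+3 = SSink /\ w k.+3 = None.
  elim=> [|k [IH _]].
    by split => //; have := hp 3; rewrite p3 /= => -[].
  have := hp k.+3; rewrite IH /= => -[e4 _]; split => //.
  by have := hp k.+4; rewrite e4 /= => -[].
have [d [w2 dc]] : exists d, w 2 = Some d /\ d <> c.
  case: hd => e2; [exists x | exists y]; split => //; by move=> e; apply: hc'; rewrite e2 e.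
have er : forall k, erase w k.+3 = [:: c; d].
  elim=> [|k IH]; first by rewrite erase3 w0 w1 w2.
  by rewrite /erase mkseqS -cats1 pmap_cat (proj2 (hk k)) cats0 -/(erase w k.+3) IH.
right; split.
  exists 2 => n; case: n => [|[|[|n]]] //; last by rewrite er.
    by rewrite /erase /= w0.
  by rewrite /erase /= w0 w1.
exists (fun i => if odd i then d else c); split.
  move=> i /=; case: (odd i) => e; [exact: dc e | exact: dc (esym e)].
move=> n; case: n => [|[|[|n]]] //; last by rewrite er.
  by rewrite /erase /= w0.
by rewrite /erase /= w0 w1.
Qed.

Lemma hub_distinct (s : strategy game2) : winning s ->
  forall c c' t, c <> c' -> proj s t = GHub ->
  edge (sinit s) (Some c) t -> edge (sinit s) (Some c') t -> False.
Proof.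
move=> ws c c' t ncc pt e1 e2.
have eh : @edge _ G2 GHub None (GVx c c') by split => //; exists c, c'.
case: (@adam_closed _ _ s GHub None (GVx c c') t id eh pt) => t1 [pt1 e3].
case: (edge_out t1) => e [t2 e4].
have := proj_morph e4; rewrite pt1 /= => -[_ hz].
have [z [ez e5]] : exists z, e = Some z /\ edge (sinit s) (Some z) t.
  by case: hz => ->; [exists c | exists c'].
subst e.
case: (exists_path t2) => p' [w' [hp0 hp]].
pose p i := match i with 0 => sinit s | 1 => t | 2 => t1 | k.+3 => p' k end.
pose w i := match i with 0 => Some z | 1 => None | 2 => Some z | k.+3 => w' k end.
have ip : inf_path (sinit s) p w.
  split => // -[|[|[|i]]] //=; by rewrite hp0.
have := ws _ _ ip.
have key : forall u, NR u -> ~ erase_prefix_of w u.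
  move=> u nu hu; have := hu 3; rewrite erase3 /= => -[a b].
  by apply: (nu 0); rewrite -a -b.
by case=> -[_ [u [nu hu]]]; apply: (key u nu).
Qed.

Lemma hub_succ (s : strategy game2) c : exists t, proj s t = GHub /\ edge (sinit s) (Some c) t.
Proof.
have eh : @edge _ G2 GStart (Some c) GHub by split => //; exists c.
have ne : ~ Eve2 GStart by [].
exact: (@adam_closed _ _ s GStart (Some c) GHub (sinit s) ne eh (proj_init s)).
Qed.

End Part2.
Arguments GStart {C}. Arguments GHub {C}. Arguments GSink {C}.

Section Part3.
Variables (C : Type) (c0 : C) (other : C -> C).
Hypothesis other_neq : forall c, other c <> c.

Inductive Tv := TRoot | TMid | TCh (c : C) (k : nat).


Variable n : C.

Definition col (c : C) : C :=
  if excluded_middle_informative (c = n) then other n else c.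

Lemma col_neq c : col c <> n.
Proof. rewrite /col; destruct (excluded_middle_informative (c = n)) => //; exact: other_neq. Qed.

Lemma col_id c : c <> n -> col c = c.
Proof. by rewrite /col; destruct (excluded_middle_informative (c = n)). Qed.

Definition tpred (v : Tv) : Tv :=
  match v with TRoot => TRoot | TMid => TRoot | TCh c 0 => TMid | TCh c k.+1 => TCh c k end.

Definition colr (v : Tv) : C :=
  match v with TRoot => n | TMid => n | TCh c k => if odd k then other (col c) else col c end.

Definition dep (v : Tv) : nat :=
  match v with TRoot => 0 | TMid => 1 | TCh c k => k.+2 end.

Definition tedge (u : Tv) (d : C) (v : Tv) : Prop := v <> TRoot /\ u = tpred v /\ d = colr v.

Lemma tedge_out u : exists d v, tedge u d v.
Proof.
case: u => [||c k].
- by exists (colr TMid), TMid.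
- by exists (colr (TCh c0 0)), (TCh c0 0).
- by exists (colr (TCh c k.+1)), (TCh c k.+1).
Qed.

Definition T : graph C := @Graph C Tv tedge tedge_out.

Lemma colr_pred v : v <> TRoot -> tpred v <> TRoot -> colr (tpred v) <> colr v.
Proof.
case: v => [||c [|k]] //= _ _.
- by move=> e; apply: (@col_neq c); rewrite -e.
- case: (odd k) => /= e; apply: (@other_neq (col c)); [exact: e | exact: esym e].
Qed.

Lemma T_sat : satisfies (@NR C) (TRoot : vert T).
Proof.
move=> p w [p0 hp] i.
case: (hp i) => ne1 [pi wi]; case: (hp i.+1) => ne2 [pi1 wi1].
rewrite wi wi1; rewrite pi1; apply: colr_pred => //; by rewrite -pi1.
Qed.

Lemma fpath_rcons (u : vert T) p c v :
  Defs.fpath u (rcons p (c, v)) <-> Defs.fpath u p /\ edge (fpath_end u p) c v.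
Proof.
elim: p u => [|[c' v'] p IH] u /=; first by rewrite /fpath_end /=; tauto.
rewrite IH /fpath_end /=; tauto.
Qed.

Lemma fpath_end_rcons (u : vert T) p c v : fpath_end u (rcons p (c, v)) = v.
Proof. by rewrite /fpath_end map_rcons last_rcons. Qed.

Fixpoint build (k : nat) (t : Tv) : seq (C * Tv) :=
  match k with 0 => [::] | k'.+1 => rcons (build k' (tpred t)) (colr t, t) end.

Lemma dep_pred v : v <> TRoot -> dep v = (dep (tpred v)).+1.
Proof. by case: v => [||c [|k]]. Qed.

Lemma dep0 v : dep v = 0 -> v = TRoot.
Proof. by case: v. Qed.

Lemma build_ok k : forall t, dep t = k -> Defs.fpath (TRoot : vert T) (build k t) /\ fpath_end (TRoot : vert T) (build k t) = t.
Proof.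
elim: k => [|k IH] t ht; first by rewrite (dep0 ht).
have nt : t <> TRoot by move=> e; rewrite e in ht.
have [h1 h2] : Defs.fpath (TRoot : vert T) (build k (tpred t)) /\ fpath_end (TRoot : vert T) (build k (tpred t)) = tpred t.
  by apply: IH; move: ht; rewrite dep_pred // => -[].
change (build k.+1 t) with (rcons (build k (tpred t)) (colr t, t)).
rewrite fpath_rcons fpath_end_rcons; split => //; split => //; rewrite h2 //.
Qed.

Lemma build_uniq q : forall t, Defs.fpath (TRoot : vert T) q -> fpath_end (TRoot : vert T) q = t ->
  q = build (size q) t /\ dep t = size q.
Proof.
elim/last_ind: q => [|q [c v] IH] t.
  by rewrite /fpath_end /= => _ <-.
rewrite fpath_rcons fpath_end_rcons => -[hq [nv [hp hc]]] <-.
have [e1 e2] := IH _ hq hp.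
rewrite size_rcons /= -e1 hc; split => //.
by rewrite dep_pred // e2.
Qed.

Lemma T_tree : is_tree (TRoot : vert T).
Proof.
move=> t; have [h1 h2] := build_ok (erefl (dep t)).
exists (build (dep t) t); split => //; split => // q hq he.
have [e1 e2] := build_uniq hq he; by rewrite e1 e2.
Qed.

End Part3.
Arguments TRoot {C}. Arguments TMid {C}.

Lemma cantor (A : Type) : card_lt A (A -> Prop).
Proof.
split.
  exists (fun a b => b = a) => x y e.
  have := f_equal (fun g : A -> Prop => g x) e.
  by move=> /= e'; rewrite -e'.
case=> f inj.
pose D a := exists P, f P = a /\ ~ P a.
have h : D (f D) <-> ~ D (f D).
  split.
    case=> P [e nP]; have eP := inj _ _ e; subst P; exact: nP.
  move=> nD; by exists D.
tauto.
Qed.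

Definition oth (M : Type) (c : M + bool) : M + bool :=
  match c with inl _ => inr true | inr b => inr (~~ b) end.

Lemma oth_neq M (c : M + bool) : oth c <> c.
Proof. by case: c => [m|[]]. Qed.

Lemma part3 (M : Type) (G : graph (M + bool)) (le : vert G -> vert G -> Prop) :
  partial_order le -> monotone le -> universal (Tv (M + bool) -> Prop) (@NR _) G ->
  has_antichain le M.
Proof.
move=> [lrefl _] mono univ.
pose TT n := T (inr true) (@oth M) n.
have hphi : forall n, exists phi : Tv (M + bool) -> vert G,
    @morphism _ (TT n) G phi /\ satisfies (@NR _) (phi TRoot).
  move=> n.
  case: (univ (TT n) TRoot (@T_tree _ _ _ _) (cantor _)) => phi [m s].
  exists phi; split => //; apply: s; exact: (T_sat (@oth_neq M)).
pose phi n := proj1_sig (constructive_indefinite_description _ (hphi n)).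
have phiP n : @morphism _ (TT n) G (phi n) /\ satisfies (@NR _) (phi n TRoot).
  exact: (proj2_sig (constructive_indefinite_description _ (hphi n))).
have key : forall x y, x <> y -> ~ le (phi x TMid) (phi y TMid).
  move=> x y nxy hle.
  have [mx _] := phiP x; have [my sy] := phiP y.
  have e1 : @edge _ (TT x) TMid y (TCh y 0).
    split => //; split => //=.
    by rewrite col_id //; apply: nesym.
  have e2 : edge (phi y TMid) y (phi x (TCh y 0)).
    exact: (mono _ _ _ _ _ hle (mx _ _ _ e1) (lrefl _)).
  have e0 : @edge _ (TT y) TRoot y TMid by [].
  pose p i := match i with 0 => phi y TRoot | 1 => phi y TMid | k.+2 => phi x (TCh y k) end.
  pose w i := match i with 0 => y | 1 => y | k.+2 => colr (@oth M) x (TCh y k.+1) end.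
  have ip : inf_path (phi y TRoot) p w.
    split => // -[|[|k]] /=.
    - exact: (my _ _ _ e0).
    - exact: e2.
    - apply: mx; by [].
  by apply: (sy _ _ ip 0).
exists (fun m => phi (inl m) TMid); split.
  move=> m m' e; case: (classic (m = m')) => // nm.
  case: (key (inl m) (inl m')); first by case.
  rewrite e; exact: lrefl.
move=> m m' nm; apply: key; by case.
Qed.

Lemma part2 (M : Type) : ~ memory_lt (eps_obj (@NR (M + bool))) M /\ ~ eps_memory_lt (@NR (M + bool)) M.
Proof.
have c12 : (inr true : M + bool) <> inr false by [].
have won : won_by_eve (game2 c12) by exists (strat2 c12); exact: strat2_win.
split.
  move=> H; case: (H _ _ _ won) => s [ws hf].
  case: (hf GHub) => _; apply.
  pose t m := constructive_indefinite_description _ (hub_succ s (inl m)).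
  exists (fun m => exist _ (proj1_sig (t m)) (proj1 (proj2_sig (t m))) : fibre s GHub).
  move=> m m' e; case: (classic (m = m')) => // nm.
  have e' : proj1_sig (t m) = proj1_sig (t m') by have := f_equal (@proj1_sig _ _) e.
  case: (hub_distinct ws (c:=inl m) (c':=inl m') (t:=proj1_sig (t m))).
  - by case.
  - exact: (proj1 (proj2_sig (t m))).
  - exact: (proj2 (proj2_sig (t m))).
  - rewrite e'; exact: (proj2 (proj2_sig (t m'))).
move=> H; case: (H _ _ _ won) => Mem [s [[_ hlt] [[iota [inj [h1 _]]] ws]]].
apply: hlt.
pose t m := constructive_indefinite_description _ (hub_succ s (inl m)).
exists (fun m => (iota (proj1_sig (t m))).2).
move=> m m' e; case: (classic (m = m')) => // nm.
have e' : proj1_sig (t m) = proj1_sig (t m').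
  apply: inj; rewrite [iota (proj1_sig (t m))]surjective_pairing [iota (proj1_sig (t m'))]surjective_pairing.
  by rewrite e !h1 (proj1 (proj2_sig (t m))) (proj1 (proj2_sig (t m'))).
case: (hub_distinct ws (c:=inl m) (c':=inl m') (t:=proj1_sig (t m))).
- by case.
- exact: (proj1 (proj2_sig (t m))).
- exact: (proj2 (proj2_sig (t m))).
- rewrite e'; exact: (proj2 (proj2_sig (t m'))).
Qed.

Theorem proposition5p1 :
  forall M : Type,
  exists (C : Type) (W : objective C),
    memory_le W bool /\
    (~ memory_lt (eps_obj W) M /\ ~ eps_memory_lt W M) /\
    exists K : Type,
      forall (G : graph C) (le : vert G -> vert G -> Prop),
        partial_order le -> monotone le -> universal K W G ->
        has_antichain le M.
Proof.
move=> M; exists (M + bool)%type, (@NR _); split; first exact: part1.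
split; first exact: part2.
exists (Tv (M + bool) -> Prop); exact: part3.
Qed.
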